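(* Let $n$ be an odd integer with prime factorisation $n=p_1^{J_1}\cdots p_s^{J_s}$, where $s\ge2$, the $p_i$ are distinct primes, $J_i\ge1$, and $\prod_{i=1}^r p_i^{J_i}<p_{r+1}$ for every $r\in\{1,\dots,s-1\}$. If $\mathcal{D}_1,\mathcal{D}_2$ are sets of positive divisors of $n$ with $\sum_{d\in\mathcal{D}_1}\phi(n/d)=\sum_{d\in\mathcal{D}_2}\phi(n/d)$, then $\mathcal{D}_1=\mathcal{D}_2$.
   Context: $\phi$ is Euler's totient function. *)

(* Defs.v *)
From mathcomp Require Import all_boot.
Set Implicit Arguments. Unset Strict Implicit. Unset Printing Implicit Defensive.

(* Main.v *)
Require Import Defs.
From mathcomp Require Import all_boot zify.

Lemma cop_small p d : prime p -> 0 < d -> d < p -> coprime d p.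
Proof.
move=> pp d0 dp; rewrite coprime_sym prime_coprime //.
apply/negP=> /(dvdn_leq d0); lia.
Qed.

Lemma perm_div N p J : prime p -> 0 < N -> N < p ->
  perm_eq (divisors (N * p ^ J)) [seq d * p ^ k | k <- iota 0 J.+1, d <- divisors N].
Proof.
move=> pp N0 Np.
have p0 := prime_gt0 pp.
have cop d : d \in divisors N -> coprime d p.
  rewrite -dvdn_divisors // => dN; apply: cop_small => //.
    by apply: dvdn_gt0 dN.
  by have := dvdn_leq N0 dN; lia.
apply: uniq_perm.
- exact: divisors_uniq.
- apply: allpairs_uniq; first exact: iota_uniq.
  + exact: divisors_uniq.
  move=> [x y] [x' y'] H1 H2 /= E.
  case/allpairsP: H1 => [[x1 y1] [hx hy /= [e1 e2]]]; subst x1 y1.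
  case/allpairsP: H2 => [[x1 y1] [hx' hy' /= [e1 e2]]]; subst x1 y1.
  have cx := cop _ hy; have cx' := cop _ hy'.
  have y0 : 0 < y by apply: (dvdn_gt0 N0); rewrite dvdn_divisors.
  have y0' : 0 < y' by apply: (dvdn_gt0 N0); rewrite dvdn_divisors.
  have Lk : x = x'.
    have := congr1 (logn p) E.
    rewrite !lognM ?expn_gt0 ?p0 // !pfactorK // !logn_coprime //;
      by rewrite coprime_sym.
  subst x'; congr pair.
  by move/eqP: E; rewrite eqn_pmul2r ?expn_gt0 ?p0 // => /eqP.
move=> m; rewrite -dvdn_divisors ?muln_gt0 ?N0 ?expn_gt0 ?p0 //.
apply/idP/allpairsP.
- move=> mdiv.
  have NJ0 : 0 < N * p ^ J by rewrite muln_gt0 N0 expn_gt0 p0.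
  have m0 : 0 < m by apply: dvdn_gt0 mdiv.
  set k := logn p m.
  have hk := pfactor_dvdnn p m.
  have md : m = m %/ p ^ k * p ^ k by rewrite divnK.
  have d0 : 0 < m %/ p ^ k by move: m0; rewrite {1}md muln_gt0 => /andP[].
  have ld : logn p (m %/ p ^ k) = 0.
    have := congr1 (logn p) md; rewrite lognM ?expn_gt0 ?p0 // pfactorK //.
    rewrite -/k; lia.
  have cd : coprime (m %/ p ^ k) p.
    rewrite coprime_sym prime_coprime //; apply/negP => pd.
    have : 0 < logn p (m %/ p ^ k) by rewrite logn_gt0 mem_primes pp d0.
    by rewrite ld.
  exists (k, m %/ p ^ k) => /=; split.
  + change (k \in iota 0 J.+1); rewrite mem_iota /= add0n ltnS.
    have := dvdn_leq_log p NJ0 mdiv.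
    rewrite lognM ?expn_gt0 ?p0 // pfactorK // [logn p N]logn_coprime ?add0n //.
    by rewrite coprime_sym; apply: cop_small.
  + rewrite -dvdn_divisors //.
    have : m %/ p ^ k %| N * p ^ J by apply: dvdn_trans mdiv; apply: dvdn_div.
    by rewrite Gauss_dvdl // coprimeXr.
  + exact: md.
- move=> [[k d] /= [hk hd ->]].
  rewrite dvdn_mul //; first by rewrite dvdn_divisors.
  apply: dvdn_exp2l; move: hk; rewrite -[0 :: _]/(iota 0 J.+1) mem_iota; lia.
Qed.

Lemma decomp N p J (a : nat -> bool) : prime p -> 0 < N -> N < p ->
  \sum_(m <- divisors (N * p ^ J)) a m * totient m =
  \sum_(k < J.+1) totient (p ^ k) * \sum_(d <- divisors N) a (d * p ^ k) * totient d.
Proof.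
move=> pp N0 Np.
rewrite (perm_big _ (perm_div N p J pp N0 Np)) big_allpairs_dep.
rewrite -(big_mkord xpredT (fun k => totient (p ^ k) * \sum_(d <- divisors N) a (d * p ^ k) * totient d)) /index_iota subn0.
apply: eq_bigr => k _; rewrite big_distrr /=.
rewrite big_seq [RHS]big_seq; apply: eq_bigr => d hd.
rewrite totient_coprime ?coprimeXr //; first lia.
apply: cop_small => //.
  by apply: (dvdn_gt0 N0); rewrite dvdn_divisors.
have : d <= N by apply: dvdn_leq => //; rewrite dvdn_divisors.
lia.
Qed.

Lemma sum_le (K M : nat) (w a : nat -> nat) : (forall k, k < K -> a k <= M) ->
  \sum_(k < K) w k * a k <= M * \sum_(k < K) w k.
Proof.
move=> ha; rewrite big_distrr /=; apply: leq_sum => k _.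
by rewrite mulnC leq_mul2r ha ?orbT.
Qed.

Lemma superinc (K M : nat) (w a b : nat -> nat) :
  (forall k, k < K -> M * \sum_(j < k) w j < w k) ->
  (forall k, k < K -> a k <= M) -> (forall k, k < K -> b k <= M) ->
  \sum_(k < K) w k * a k = \sum_(k < K) w k * b k -> forall k, k < K -> a k = b k.
Proof.
elim: K => [|K IH] hw ha hb E k hk //.
move: E; rewrite !big_ord_recr /=.
have hA := @sum_le K M w a (fun k h => ha k (ltnW h)).
have hB := @sum_le K M w b (fun k h => hb k (ltnW h)).
have hK := hw K (ltnSn K).
set SA := \sum_(i < K) w i * a i in hA *.
set SB := \sum_(i < K) w i * b i in hB *.
set W := M * _ in hA hB hK.
move=> E.
have eK : a K = b K.
  case: (ltngtP (a K) (b K)) => // h.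
  - have : w K * (a K).+1 <= w K * b K by rewrite leq_mul2l h orbT.
    lia.
  - have : w K * (b K).+1 <= w K * a K by rewrite leq_mul2l h orbT.
    lia.
have eS : SA = SB by rewrite eK in E; lia.
case: (ltngtP k K) => hkK; last by rewrite hkK.
- apply: IH => //.
  + by move=> j hj; apply: hw; lia.
  + by move=> j hj; apply: ha; lia.
  + by move=> j hj; apply: hb; lia.
- lia.
Qed.

Lemma geom p k : prime p -> \sum_(j < k.+1) totient (p ^ j) = p ^ k.
Proof.
move=> pp; have p0 := prime_gt0 pp.
elim: k => [|k IH]; first by rewrite big_ord1 expn0.
rewrite big_ord_recr /= IH totient_pfactor // /= expnS.
by rewrite -[X in _ = X * _](prednK p0) mulSn.
Qed.

Definition Inv N := 0 < N /\ \sum_(m <- divisors N) totient m = N /\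
  forall a b : nat -> bool,
  \sum_(m <- divisors N) a m * totient m = \sum_(m <- divisors N) b m * totient m ->
  forall m, m \in divisors N -> a m = b m.

Lemma Inv1 : Inv 1.
Proof.
split => //; split; first by rewrite /divisors /= big_seq1.
move=> a b; rewrite /divisors /= !big_seq1 => E m; rewrite inE => /eqP ->.
by move: E; case: (a 1); case: (b 1).
Qed.

Lemma Inv_step N p J : prime p -> N.+1 < p -> Inv N -> Inv (N * p ^ J).
Proof.
move=> pp Np [N0 [SN IN]].
have p0 := prime_gt0 pp.
have Np' : N < p by lia.
split; first by rewrite muln_gt0 N0 expn_gt0 p0.
split.
  transitivity (\sum_(m <- divisors (N * p ^ J)) (fun _ => true) m * totient m).
    by apply: eq_bigr => m _; rewrite mul1n.
  rewrite decomp //.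
  transitivity (\sum_(k < J.+1) totient (p ^ k) * N).
    apply: eq_bigr => k _; congr (_ * _); rewrite -{2}SN.
    by apply: eq_bigr => d _; rewrite mul1n.
  by rewrite -big_distrl /= geom // mulnC.
move=> a b; rewrite !decomp // => E.
have hw : forall k, k < J.+1 -> N * \sum_(j < k) totient (p ^ j) < totient (p ^ k).
  move=> [|k] _; first by rewrite big_ord0 muln0 expn0.
  rewrite geom // totient_pfactor //= ltn_pmul2r ?expn_gt0 ?p0 //; lia.
have hb : forall c : nat -> bool, forall k, k < J.+1 ->
   \sum_(d <- divisors N) c (d * p ^ k) * totient d <= N.
  move=> c k _; rewrite -{2}SN; apply: leq_sum => d _.
  by case: (c _); rewrite ?mul1n ?mul0n.
have key := superinc _ _ _ _ _ hw (hb a) (hb b) E.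
move=> m; rewrite (perm_mem (perm_div N p J pp N0 Np')).
case/allpairsP => [[k d] /= [hk hd ->]].
have hk' : k < J.+1 by move: hk; rewrite -[0 :: _]/(iota 0 J.+1) mem_iota; lia.
exact: (IN (fun d => a (d * p ^ k)) (fun d => b (d * p ^ k)) (key k hk')).
Qed.

Lemma divdiv n d : 0 < n -> d %| n -> n %/ (n %/ d) = d.
Proof. by move=> n0 dn; rewrite divnA // mulKn. Qed.

Lemma perm_rev n : 0 < n -> perm_eq (divisors n) (map (fun d => n %/ d) (divisors n)).
Proof.
move=> n0; apply: uniq_perm; first exact: divisors_uniq.
  rewrite map_inj_in_uniq ?divisors_uniq // => d1 d2.
  rewrite -!dvdn_divisors // => h1 h2 E.
  by rewrite -(divdiv n d1 n0 h1) E divdiv.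
move=> m; apply/idP/mapP.
  rewrite -dvdn_divisors // => hm; exists (n %/ m); last by rewrite divdiv.
  by rewrite -dvdn_divisors // dvdn_div.
by move=> [d]; rewrite -!dvdn_divisors // => hd ->; rewrite dvdn_div.
Qed.

Lemma sum_conv n (D : {set 'I_n.+1}) : 0 < n ->
  (forall d : 'I_n.+1, d \in D -> (0 < d) && (d %| n)) ->
  \sum_(d in D) totient (n %/ d) =
  \sum_(m <- divisors n) (inord (n %/ m) \in D) * totient m.
Proof.
move=> n0 HD.
rewrite (eq_bigl (fun i : 'I_n.+1 => (inord (val i) : 'I_n.+1) \in D)); last first.
  by move=> i; rewrite inord_val.
rewrite -(big_mkord (fun i => (inord i : 'I_n.+1) \in D) (fun i => totient (n %/ i))).
rewrite /index_iota subn0 -big_filter.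
rewrite (perm_big (filter (fun i => (inord i : 'I_n.+1) \in D) (divisors n))); last first.
  apply: uniq_perm; [exact: filter_uniq (iota_uniq 0 n.+1)|exact: filter_uniq (divisors_uniq n)|].
  move=> i; rewrite !mem_filter; case Qi: (_ \in D) => //; rewrite !andTb.
  rewrite mem_iota -dvdn_divisors // add0n.
  apply/idP/idP => h.
    by have := HD _ Qi; rewrite inordK // => /andP[].
  by have := dvdn_leq n0 h; lia.
rewrite big_filter big_mkcond /=.
rewrite [RHS](perm_big _ (perm_rev n n0)) big_map.
rewrite big_seq [RHS]big_seq; apply: eq_bigr => d hd.
rewrite divdiv // ?dvdn_divisors //.
by case: (_ \in D); rewrite ?mul1n ?mul0n.
Qed.

Lemma pref (F : nat -> nat) r r' : r <= r' -> \prod_(i < r) F i %| \prod_(i < r') F i.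
Proof.
elim: r' => [|r' IH] h; first by move: h; rewrite leqn0 => /eqP ->.
case: (ltngtP r r'.+1) h => // [hr|->] _; last by [].
by rewrite big_ord_recr /= dvdn_mulr // IH.
Qed.

Lemma odd_lt a b : odd a -> odd b -> a < b -> a.+1 < b.
Proof.
move=> oa ob ab; rewrite ltn_neqAle ab andbT; apply/eqP => e.
by move: ob; rewrite -e /= oa.
Qed.

Theorem lemma3p4 (n s : nat) (p J : seq nat)
  (D1 D2 : {set 'I_n.+1}) :
  odd n ->
  2 <= s ->
  size p = s -> size J = s ->
  uniq p ->
  (forall i, i < s -> prime (nth 0 p i)) ->
  (forall i, i < s -> 1 <= nth 0 J i) ->
  n = \prod_(i < s) nth 0 p i ^ nth 0 J i ->
  (forall r, 1 <= r <= s - 1 ->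
     \prod_(i < r) nth 0 p i ^ nth 0 J i < nth 0 p r) ->
  (forall d : 'I_n.+1, d \in D1 -> (0 < d) && (d %| n)) ->
  (forall d : 'I_n.+1, d \in D2 -> (0 < d) && (d %| n)) ->
  \sum_(d in D1) totient (n %/ d) = \sum_(d in D2) totient (n %/ d) ->
  D1 = D2.
Proof.
move=> on _ _ _ _ hp hJ hn hlt H1 H2 E.
have n0 : 0 < n by case: n on {hn H1 H2 E D1 D2}.
have hinv : forall r, r <= s -> Inv (\prod_(i < r) nth 0 p i ^ nth 0 J i).
  elim=> [|r IH] hr; first by rewrite big_ord0; exact: Inv1.
  rewrite big_ord_recr /=.
  have hrs : r < s by [].
  apply: Inv_step; first exact: hp.
  set N := \prod_(i < r) _.
  have lt : N < nth 0 p r.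
    case: r hr hrs IH @N => [|r] hr hrs _.
      by rewrite /= big_ord0; apply: prime_gt1; apply: hp.
    by apply: hlt; lia.
  apply: odd_lt => //.
    apply: (dvdn_odd _ on); rewrite hn; exact: (pref (fun i => nth 0 p i ^ nth 0 J i) r s (ltnW hrs)).
  apply: (dvdn_odd _ on); rewrite hn.
  apply: dvdn_trans (pref (fun i => nth 0 p i ^ nth 0 J i) _ _ hr); rewrite big_ord_recr /= dvdn_mull //.
  by apply: dvdn_exp; [apply: hJ|].
  exact: IH (ltnW hrs).
have [_ [_ IN]] := hinv s (leqnn s); rewrite -hn in IN.
rewrite !sum_conv // in E.
have key := IN _ _ E.
have kd : forall d : 'I_n.+1, 0 < d -> d %| n -> (d \in D1) = (d \in D2).
  move=> d d0 dn.
  have := key (n %/ d); rewrite -dvdn_divisors // dvdn_div // divdiv // inord_val.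
  by apply.
apply/setP => d.
case h1: (d \in D1).
  by have /andP[d0 dn] := H1 _ h1; rewrite -kd.
case h2: (d \in D2) => //.
by have /andP[d0 dn] := H2 _ h2; rewrite kd // h2 in h1.
Qed.
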